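(* Let $M\in\mathbb R^{n\times n}$ be a sufficient matrix and let $B_1,B_2$ be complementary bases that are adjacent, i.e. $\dim\big(\mathcal C(B_1)\cap\mathcal C(B_2)\big)=n-1$. Then $|B_1\cap B_2|\ge n-2$.
   Context: Let $M\in\mathbb R^{n\times n}$ and $A=[\,I\;\;-M\,]\in\mathbb R^{n\times 2n}$, with columns indexed by $\{1,\dots,2n\}$; for $J\subseteq\{1,\dots,2n\}$, $A_{\cdot J}$ denotes the submatrix of columns indexed by $J$. For $i\in\{1,\dots,2n\}$ the complementary index is $\bar i=i+n$ if $i\le n$ and $\bar i=i-n$ if $i>n$. A set $J$ is complementary if $i\in J$ implies $\bar i\notin J$. A complementary basis is a complementary set $B$ with $|B|=n$ and $A_{\cdot B}$ invertible. For a complementary set $J$, the complementary cone is $\mathcal C(J)=\{A_{\cdot J}\lambda:\lambda\ge 0\}$. The dimension of a convex set is the dimension of its affine hull. $M$ is column sufficient if $[z_i(Mz)_i\le 0\ \forall i]\Rightarrow[z_i(Mz)_i=0\ \forall i]$; row sufficient if $M^T$ is column sufficient; sufficient if both. *)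

(* Defs.v *)
From HB Require Import structures.
From mathcomp Require Import all_boot all_order all_algebra.
Set Implicit Arguments. Unset Strict Implicit. Unset Printing Implicit Defensive.
Import Order.TTheory GRing.Theory Num.Theory.
Local Open Scope ring_scope.

Section LCP.
Variables (R : realFieldType) (n : nat).

Definition Amx (M : 'M[R]_n) : 'M[R]_(n, n + n) := row_mx 1%:M (- M).

Lemma cbar_proof (i : 'I_(n + n)) :
  ((if (i < n)%N then (i + n)%N else (i - n)%N) < n + n)%N.
Proof.
case: ifP => H; first by rewrite ltn_add2r.
by apply: leq_ltn_trans (leq_subr _ _) (ltn_ord i).
Qed.

Definition cbar (i : 'I_(n + n)) : 'I_(n + n) := Ordinal (cbar_proof i).

Definition complementary (J : {set 'I_(n + n)}) : Prop :=
  forall i, i \in J -> cbar i \notin J.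

Definition subcols (M : 'M[R]_n) (J : {set 'I_(n + n)}) : 'M[R]_(n, #|J|) :=
  \matrix_(i < n, k < #|J|) Amx M i (enum_val k).

Definition compl_basis (M : 'M[R]_n) (B : {set 'I_(n + n)}) : Prop :=
  complementary B /\
  exists e : #|B| = n, castmx (erefl n, e) (subcols M B) \in unitmx.

Definition ccone (M : 'M[R]_n) (J : {set 'I_(n + n)}) : 'cV[R]_n -> Prop :=
  fun x => exists lam : 'cV[R]_#|J|,
    (forall k, 0 <= lam k 0) /\ x = subcols M J *m lam.

(* affine dimension: dim of affine hull of S.
   affdim_ge S k : S contains k+1 affinely independent points
   x0, x0 + X_1, ..., x0 + X_k (columns X_j linearly independent). *)
Definition affdim_ge (S : 'cV[R]_n -> Prop) (k : nat) : Prop :=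
  exists (x0 : 'cV[R]_n) (X : 'M[R]_(n, k)),
    S x0 /\ (forall j, S (x0 + col j X)) /\ \rank X = k.

Definition affine_dim (S : 'cV[R]_n -> Prop) (d : nat) : Prop :=
  affdim_ge S d /\ forall k, affdim_ge S k -> (k <= d)%N.

Definition col_sufficient (M : 'M[R]_n) : Prop :=
  forall z : 'cV[R]_n,
    (forall i, z i 0 * (M *m z) i 0 <= 0) ->
    (forall i, z i 0 * (M *m z) i 0 = 0).

Definition row_sufficient (M : 'M[R]_n) : Prop := col_sufficient M^T.

Definition sufficient (M : 'M[R]_n) : Prop :=
  col_sufficient M /\ row_sufficient M.

End LCP.

(* Main.v *)
Require Import Defs.
From HB Require Import structures.
From mathcomp Require Import all_boot all_order all_algebra.
Import Order.TTheory GRing.Theory Num.Theory.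
Local Open Scope ring_scope.
Set Implicit Arguments. Unset Strict Implicit. Unset Printing Implicit Defensive.

Section Aux.
Variables (R : realFieldType) (n : nat).

Lemma cbar_lshift (i : 'I_n) : cbar (lshift n i) = rshift n i.
Proof. by apply: val_inj; rewrite /= ltn_ord addnC. Qed.

Lemma cbar_rshift (i : 'I_n) : cbar (rshift n i) = lshift n i.
Proof. by apply: val_inj; rewrite /= ltnNge leq_addr /= addKn. Qed.

Lemma cbarK (j : 'I_(n + n)) : cbar (cbar j) = j.
Proof.
rewrite -(splitK j); case: (split j) => a /=.
  by rewrite cbar_lshift cbar_rshift.
by rewrite cbar_rshift cbar_lshift.
Qed.

Lemma cbar_inj : injective (@cbar n).
Proof. exact: can_inj cbarK. Qed.

Lemma pair_lemma (B : {set 'I_(n + n)}) :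
  complementary B -> #|B| = n -> forall j, j \notin B -> cbar j \in B.
Proof.
move=> hc hB j hj.
have [/imsetP [b hb ->]|hnj] := boolP (j \in (@cbar n) @: B); first by rewrite cbarK.
have hI : B :&: ((@cbar n) @: B) = set0.
  apply/setP => x; rewrite !inE; apply/negP => /andP [hx /imsetP [b hb hxb]].
  by move: (hc _ hx); rewrite hxb cbarK hb.
have h1 := cardsU B ((@cbar n) @: B).
rewrite hI cards0 subn0 card_imset in h1; last exact: cbar_inj.
have hsub : B :|: (@cbar n) @: B \subset [set~ j].
  apply/subsetP => x; rewrite !inE => /orP [] hx; apply/negP => /eqP hxj;
  by move: hx; rewrite hxj ?(negbTE hj) ?(negbTE hnj).
move: (subset_leq_card hsub); rewrite cardsC1 card_ord h1 hB.
have hp : (0 < n + n)%N by exact: (leq_ltn_trans (leq0n j) (ltn_ord j)).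
by rewrite leqNgt ltn_predL hp.
Qed.
End Aux.

Section Aux2.
Variables (R : realFieldType) (n : nat).

Lemma suff_key (M : 'M[R]_n) (hM : col_sufficient M) (a1 a2 : 'cV[R]_(n + n)) :
  Amx M *m a1 = Amx M *m a2 ->
  (forall j, 0 <= a1 j 0) -> (forall j, 0 <= a2 j 0) ->
  (forall j, a1 j 0 * a1 (cbar j) 0 = 0) -> (forall j, a2 j 0 * a2 (cbar j) 0 = 0) ->
  forall j, a1 j 0 * a2 (cbar j) 0 = 0.
Proof.
move=> hA h1 h2 c1 c2.
have : Amx M *m (a1 - a2) = 0 by rewrite mulmxBr hA subrr.
rewrite -[a1 - a2]vsubmxK /Amx mul_row_col mul1mx mulNmx => /eqP.
rewrite subr_eq0 => /eqP Hw.
set z := dsubmx (a1 - a2).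
have key : forall i, z i 0 * (M *m z) i 0 =
   - (a1 (rshift n i) 0 * a2 (lshift n i) 0 + a2 (rshift n i) 0 * a1 (lshift n i) 0).
  move=> i; rewrite -Hw /z !mxE.
  have e1 := c1 (lshift n i); have e2 := c2 (lshift n i).
  rewrite cbar_lshift in e1 e2.
  rewrite mulrBl !mulrBr (mulrC (a1 _ _) (a1 _ _)) e1 (mulrC (a2 _ _) (a2 _ _)) e2.
  by rewrite sub0r subr0 opprD.
have hz : forall i, z i 0 * (M *m z) i 0 <= 0.
  by move=> i; rewrite key oppr_le0 addr_ge0 // mulr_ge0.
have H0 := hM z hz.
have Hb : forall i, a1 (rshift n i) 0 * a2 (lshift n i) 0 = 0 /\
                    a2 (rshift n i) 0 * a1 (lshift n i) 0 = 0.
  move=> i; move: (H0 i); rewrite key => /eqP; rewrite oppr_eq0.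
  by rewrite paddr_eq0 ?mulr_ge0 // => /andP [/eqP -> /eqP ->].
move=> j; rewrite -(splitK j); case: (split j) => a /=.
  by rewrite cbar_lshift mulrC (proj2 (Hb a)).
by rewrite cbar_rshift (proj1 (Hb a)).
Qed.

Definition Gmx m (g : 'I_m -> 'I_(n + n)) : 'M[R]_(n + n, m) :=
  \matrix_(j, k) (g k == j)%:R.

Definition scat m (g : 'I_m -> 'I_(n + n)) (lam : 'cV[R]_m) : 'cV[R]_(n + n) :=
  Gmx g *m lam.

Definition SC (M : 'M[R]_n) m (g : 'I_m -> 'I_(n + n)) : 'M[R]_(n, m) :=
  \matrix_(i < n, k < m) Amx M i (g k).

Lemma Amx_scat M m (g : 'I_m -> 'I_(n + n)) (lam : 'cV[R]_m) :
  Amx M *m scat g lam = SC M g *m lam.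
Proof.
rewrite /scat mulmxA; congr (_ *m _).
apply/matrixP => i k; rewrite mxE [RHS]mxE.
under eq_bigr => j _ do rewrite [X in _ * X]mxE.
rewrite (bigD1 (g k)) //= eqxx mulr1 big1 ?addr0 // => j hj.
by rewrite eq_sym (negbTE hj) mulr0.
Qed.

Lemma scat_at m (g : 'I_m -> 'I_(n + n)) (lam : 'cV[R]_m) k :
  injective g -> scat g lam (g k) 0 = lam k 0.
Proof.
move=> hg; rewrite mxE; under eq_bigr => ? _ do rewrite mxE.
rewrite (bigD1 k) //= eqxx mul1r big1 ?addr0 // => k' hk.
by rewrite (inj_eq hg) (negbTE hk) mul0r.
Qed.

Lemma scat_out m (g : 'I_m -> 'I_(n + n)) (lam : 'cV[R]_m) j :
  (forall k, g k != j) -> scat g lam j 0 = 0.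
Proof.
by move=> h; rewrite mxE big1 // => k _; rewrite mxE (negbTE (h k)) mul0r.
Qed.

Lemma scat_ge0 m (g : 'I_m -> 'I_(n + n)) (lam : 'cV[R]_m) :
  (forall k, 0 <= lam k 0) -> forall j, 0 <= scat g lam j 0.
Proof.
by move=> h j; rewrite mxE sumr_ge0 // => k _; rewrite mxE mulr_ge0 ?ler0n.
Qed.

Lemma scat_comp m (g : 'I_m -> 'I_(n + n)) (lam : 'cV[R]_m) :
  (forall k k', g k' != cbar (g k)) -> forall j, scat g lam j 0 * scat g lam (cbar j) 0 = 0.
Proof.
move=> hc j; case: (pickP (fun k => g k == j)) => [k /eqP hk|hn].
  by rewrite (@scat_out _ _ _ (cbar j)) ?mulr0 // => k'; rewrite -hk hc.
by rewrite scat_out ?mul0r // => k; rewrite hn.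
Qed.
End Aux2.

Section Aux3.
Variables (R : realFieldType) (n : nat).

Lemma side (S : 'M[R]_n) (u : S \in unitmx) (P : 'cV[R]_n -> Prop)
  (hP : forall x, P x -> exists lam : 'cV[R]_n, (forall k, 0 <= lam k 0) /\ x = S *m lam)
  (x0 : 'cV[R]_n) (X : 'M[R]_(n, n.-1)) (hx0 : P x0) (hX : forall j, P (x0 + col j X))
  (hr : \rank X = n.-1) :
  (forall k, 0 <= (invmx S *m (x0 + \sum_(j < n.-1) (x0 + col j X))) k 0) /\
  (#|[set k | ((invmx S *m (x0 + \sum_(j < n.-1) (x0 + col j X))) k 0 == 0)%R]| <= 1)%N.
Proof.
have hL : forall x, P x -> forall k, 0 <= (invmx S *m x) k 0.
  by move=> x /hP [lam [hl ->]] k; rewrite mulKmx.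
have eq : forall k, (invmx S *m (x0 + \sum_(j < n.-1) (x0 + col j X))) k 0 =
   (invmx S *m x0) k 0 + \sum_(j < n.-1) (invmx S *m (x0 + col j X)) k 0.
  by move=> k; rewrite mulmxDr mulmx_sumr mxE summxE.
split.
  by move=> k; rewrite eq; apply: addr_ge0; [exact: hL | apply: sumr_ge0 => j _; exact: hL].
set K := [set k | _].
have hK : forall k, k \in K -> forall j, (invmx S *m col j X) k 0 = 0.
  move=> k; rewrite inE eq paddr_eq0; last 2 first.
  - exact: hL.
  - by apply: sumr_ge0 => j _; exact: hL.
  case/andP => /eqP h0 /eqP hs j.
  have hs' := psumr_eq0P (fun j _ => hL _ (hX j) k) hs.
  have := hs' j isT.
  by rewrite mulmxDr mxE h0 add0r.
set Q := \matrix_(i < #|K|, r < n) invmx S (enum_val i) r.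
set T := \matrix_(r < n, i < #|K|) S r (enum_val i).
have QX : Q *m X = 0.
  apply/matrixP => i j; rewrite [RHS]mxE.
  have -> : (Q *m X) i j = (invmx S *m col j X) (enum_val i) 0.
    by rewrite !mxE; apply: eq_bigr => r _; rewrite !mxE.
  by apply: hK; apply: enum_valP.
have QT : Q *m T = 1%:M.
  apply/matrixP => i i'.
  have -> : (Q *m T) i i' = (invmx S *m S) (enum_val i) (enum_val i').
    by rewrite !mxE; apply: eq_bigr => r _; rewrite !mxE.
  by rewrite mulVmx // !mxE (inj_eq enum_val_inj).
rewrite -[#|K|](@mxrank1 R) -QT.
apply: leq_trans (mxrankM_maxl Q T) _.
have hsub : (Q <= kermx X)%MS by apply/sub_kermxP.
have hk := mxrankS hsub.
apply: leq_trans hk _.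
by rewrite mxrank_ker hr; case: (n) => [|m] //=; rewrite subSn // subnn.
Qed.
End Aux3.

Section Aux4.
Variables (R : realFieldType) (n : nat).

Lemma core (M : 'M[R]_n) (hM : col_sufficient M) m1 m2 (e1 : m1 = n) (e2 : m2 = n)
  (g1 : 'I_m1 -> 'I_(n+n)) (g2 : 'I_m2 -> 'I_(n+n)) :
  injective g1 -> injective g2 ->
  (forall k k', g1 k' != cbar (g1 k)) -> (forall k k', g2 k' != cbar (g2 k)) ->
  castmx (erefl n, e1) (SC M g1) \in unitmx -> castmx (erefl n, e2) (SC M g2) \in unitmx ->
  forall (P : 'cV[R]_n -> Prop),
  (forall x, P x -> (exists lam : 'cV[R]_m1, (forall k, 0 <= lam k 0) /\ x = SC M g1 *m lam) /\
                    (exists lam : 'cV[R]_m2, (forall k, 0 <= lam k 0) /\ x = SC M g2 *m lam)) ->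
  forall x0 (X : 'M[R]_(n, n.-1)), P x0 -> (forall j, P (x0 + col j X)) -> \rank X = n.-1 ->
  exists K1 : {set 'I_m1}, exists K2 : {set 'I_m2}, (#|K1| <= 1)%N /\ (#|K2| <= 1)%N /\
    forall k1 k2, g2 k2 = cbar (g1 k1) -> k1 \in K1 \/ k2 \in K2.
Proof.
subst m1 m2; rewrite !castmx_id => i1 i2 hc1 hc2 u1 u2 P hP x0 X hx0 hX hr.
have [n1 c1] := side u1 (fun x hx => proj1 (hP x hx)) hx0 hX hr.
have [n2 c2] := side u2 (fun x hx => proj2 (hP x hx)) hx0 hX hr.
set c := x0 + _ in n1 n2 c1 c2.
eexists; eexists; split; first exact: c1.
split; first exact: c2.
move=> k1 k2 hk.
have hA : Amx M *m scat g1 (invmx (SC M g1) *m c) = Amx M *m scat g2 (invmx (SC M g2) *m c).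
  by rewrite !Amx_scat !mulKVmx.
have := suff_key hM hA (scat_ge0 g1 n1) (scat_ge0 g2 n2) (scat_comp _ hc1) (scat_comp _ hc2) (g1 k1).
rewrite -hk !scat_at // => /eqP; rewrite mulf_eq0 !inE => /orP [] ->; auto.
Qed.
End Aux4.

Theorem mainTheorem1 (R : realFieldType) (n : nat) (M : 'M[R]_n)
    (B1 B2 : {set 'I_(n + n)}) :
  sufficient M ->
  compl_basis M B1 -> compl_basis M B2 ->
  affine_dim (fun x => ccone M B1 x /\ ccone M B2 x) n.-1 ->
  (n - 2 <= #|B1 :&: B2|)%N.
Proof.
move=> [hM _] [hc1 [e1 u1]] [hc2 [e2 u2]] [[x0 [X [hx0 [hX hr]]]] _].
have hcb1 : forall k k' : 'I_#|B1|, enum_val k' != cbar (enum_val k).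
  move=> k k'; apply/eqP => h; have := hc1 _ (enum_valP k); by rewrite -h enum_valP.
have hcb2 : forall k k' : 'I_#|B2|, enum_val k' != cbar (enum_val k).
  move=> k k'; apply/eqP => h; have := hc2 _ (enum_valP k); by rewrite -h enum_valP.
have [K1 [K2 [c1 [c2 hK]]]] := @core R n M hM #|B1| #|B2| e1 e2 enum_val enum_val
  enum_val_inj enum_val_inj hcb1 hcb2 u1 u2
  (fun x => ccone M B1 x /\ ccone M B2 x) (fun x hx => hx) x0 X hx0 hX hr.
have hsub : B1 :\: B2 \subset (enum_val @: K1) :|: ((@cbar n) @^-1: (enum_val @: K2)).
  apply/subsetP => j; rewrite inE => /andP [hj2 hj1].
  have hcj : cbar j \in B2 := pair_lemma hc2 e2 hj2.
  have := hK (enum_rank_in hj1 j) (enum_rank_in hcj (cbar j)).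
  rewrite (enum_rankK_in hj1 hj1) (enum_rankK_in hcj hcj) => /(_ erefl) [] h; rewrite !inE; apply/orP.
    by left; apply/imsetP; exists (enum_rank_in hj1 j) => //; rewrite (enum_rankK_in hj1 hj1).
  by right; apply/imsetP; exists (enum_rank_in hcj (cbar j)) => //; rewrite (enum_rankK_in hcj hcj).
have hb : (#|B1 :\: B2| <= 2)%N.
  apply: leq_trans (subset_leq_card hsub) _.
  rewrite cardsU; apply: leq_trans (leq_subr _ _) _.
  rewrite card_preimset; last exact: cbar_inj.
  apply: (@leq_add _ _ 1 1); apply: leq_trans (leq_imset_card _ _) _ => //.
have -> : (n - 2 = #|B1| - 2)%N by rewrite e1.
by rewrite -(cardsID B2 B1) leq_subLR [(2 + _)%N]addnC leq_add2l.
Qed.
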